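(* A planar three-body motion $\Gamma(t)$ (Newtonian, in the $xy$-plane, with angular momentum $\Omega\mathbf k$) whose initial position $\Gamma(t_0)$ is not collinear is completely determined by its moduli curve $\bar\Gamma(t)$, its initial position $\Gamma(t_0)$ and its angular momentum vector. The curve $\bar\Gamma(t)$ is a solution of the $\Omega$-reduced Newton's equation $$\ddot I_i=4T_i-\Big(\frac{m_i+2m_{i+1}}{r_{i,i+1}^3}+\frac{m_i+2m_{i+2}}{r_{i,i+2}^3}\Big)I_i-\Big(\frac1{r_{i,i+1}^3}-\frac1{r_{i,i+2}^3}\Big)\big(m_{i+1}I_{i+1}-m_{i+2}I_{i+2}\big),\qquad i\ (\mathrm{mod}\ 3),$$ with kinetic energy terms $T_i=\frac{\dot I_i^2}{8I_i}+\frac12\omega_i^2I_i$, where $\omega_i=\omega_i^0+\frac{\Omega}{I}$. Conversely, each solution curve of this $\Omega$-reduced Newton's equation can be realized as the moduli curve of a three-body motion in the $xy$-plane, with a given (non-collinear) initial position and with $\Omega\mathbf k$ as the conserved angular momentum.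
   Context: Masses $m_1,m_2,m_3>0$, $m_1+m_2+m_3=1$; position vectors $\mathbf a_i$ with $\sum m_i\mathbf a_i=0$; a three-body motion solves Newton's equations $m_i\ddot{\mathbf a}_i=\sum_{j\ne i}\frac{m_im_j}{r_{ij}^3}(\mathbf a_j-\mathbf a_i)$ with $r_{ij}=|\mathbf a_i-\mathbf a_j|$. Angular momentum $\mathbf\Omega=\sum m_i\mathbf a_i\times\dot{\mathbf a}_i$. $I_i=m_i|\mathbf a_i|^2$, $I=\sum I_i$; the mutual distances are given by $r_{jk}^2=\frac{(1-m_i)I-I_i}{m_jm_k}$ for $\{i,j,k\}=\{1,2,3\}$. The moduli curve is the image of the motion modulo rotations (with orientation), described locally by $(I_1,I_2,I_3)$. With $\alpha_j$ the central angle between $\mathbf a_{j+1}$ and $\mathbf a_{j+2}$, $\Delta$ the triangle area and $C_1=-m_1I_1+m_2I_2+m_3I_3$ (cyclic), $\omega_1^0=\frac1I(I_3\dot\alpha_2-I_2\dot\alpha_3)=\frac{1}{8m_1m_2m_3\Delta I}[(C_3I_3-C_2I_2)\frac{\dot I_1}{I_1}-(C_1+2m_2I_3)\dot I_2+(C_1+2m_3I_2)\dot I_3]$, and $\omega_2^0,\omega_3^0$ by cyclic permutation; $\omega_i$ is the scalar angular velocity of $\mathbf a_i$. *)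

(* Defs.v *)
From Stdlib Require Import Reals.
From Coquelicot Require Import Coquelicot.
Open Scope R_scope.

Inductive body : Type := B1 | B2 | B3.

Definition nxt (i : body) : body :=
  match i with B1 => B2 | B2 => B3 | B3 => B1 end.

Definition sum3 (f : body -> R) : R := f B1 + f B2 + f B3.

Definition masses_ok (m : body -> R) : Prop :=
  (forall i, 0 < m i) /\ sum3 m = 1.

Definition in_J (lo hi : Rbar) (t : R) : Prop := Rbar_lt lo t /\ Rbar_lt t hi.

Definition signed_area (x y : body -> R) : R :=
  ((x B2 - x B1) * (y B3 - y B1) - (y B2 - y B1) * (x B3 - x B1)) / 2.

Definition noncollinear (x y : body -> R) : Prop := signed_area x y <> 0.

Definition com0 (m x y : body -> R) : Prop :=
  sum3 (fun i => m i * x i) = 0 /\ sum3 (fun i => m i * y i) = 0.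

Definition dist (x y : body -> R) (i j : body) : R :=
  sqrt ((x i - x j) ^ 2 + (y i - y j) ^ 2).

Definition force_x (m x y : body -> R) (i : body) : R :=
  let j := nxt i in let k := nxt j in
  m i * m j * (x j - x i) / (dist x y i j) ^ 3
  + m i * m k * (x k - x i) / (dist x y i k) ^ 3.

Definition force_y (m x y : body -> R) (i : body) : R :=
  let j := nxt i in let k := nxt j in
  m i * m j * (y j - y i) / (dist x y i j) ^ 3
  + m i * m k * (y k - y i) / (dist x y i k) ^ 3.

Definition at_time (f : body -> R -> R) (t : R) : body -> R := fun i => f i t.

Definition is_motion (m : body -> R) (lo hi : Rbar) (x y : body -> R -> R) : Prop :=
  forall t, in_J lo hi t ->
    com0 m (at_time x t) (at_time y t) /\
    (forall i j, i <> j -> (x i t, y i t) <> (x j t, y j t)) /\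
    (forall i,
       ex_derive (x i) t /\ ex_derive (y i) t /\
       is_derive (fun s => Derive (x i) s) t
                 (force_x m (at_time x t) (at_time y t) i / m i) /\
       is_derive (fun s => Derive (y i) s) t
                 (force_y m (at_time x t) (at_time y t) i / m i)).

(* scalar angular momentum Omega (the angular momentum vector is Omega k) *)
Definition angmom (m : body -> R) (x y : body -> R -> R) (t : R) : R :=
  sum3 (fun i => m i * (x i t * Derive (y i) t - y i t * Derive (x i) t)).

Definition Imom (m : body -> R) (x y : body -> R -> R) (i : body) (t : R) : R :=
  m i * ((x i t) ^ 2 + (y i t) ^ 2).

(* Two motions have the same moduli curve: at every time the configurations
   differ by a rotation (an element of SO(2), so orientation is kept). *)
Definition same_moduli_curve (lo hi : Rbar) (x y x' y' : body -> R -> R) : Prop :=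
  forall t, in_J lo hi t -> exists th : R, forall i,
    x' i t = cos th * x i t - sin th * y i t /\
    y' i t = sin th * x i t + cos th * y i t.

(* Iv : values I_i, dIv : values of dI_i/dt, at one time. *)

Definition Itot (Iv : body -> R) : R := sum3 Iv.

(* r_{jk}^2 = ((1 - m_i) I - I_i) / (m_j m_k), {i,j,k} = {1,2,3}:
   squared length of the side opposite to body i *)
Definition rsq_opp (m Iv : body -> R) (i : body) : R :=
  let j := nxt i in let k := nxt j in
  ((1 - m i) * Itot Iv - Iv i) / (m j * m k).

(* r_{i,i+1} is opposite to i+2, r_{i,i+2} is opposite to i+1 *)
Definition r_next (m Iv : body -> R) (i : body) : R := sqrt (rsq_opp m Iv (nxt (nxt i))).
Definition r_prev (m Iv : body -> R) (i : body) : R := sqrt (rsq_opp m Iv (nxt i)).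

(* Heron: 16 Delta^2 = 2(pq+qr+rp) - (p^2+q^2+r^2), p,q,r squared sides *)
Definition heron (m Iv : body -> R) : R :=
  let p := rsq_opp m Iv B1 in let q := rsq_opp m Iv B2 in let r := rsq_opp m Iv B3 in
  2 * (p * q + q * r + r * p) - (p ^ 2 + q ^ 2 + r ^ 2).

(* oriented triangle area Delta; sg = +1 or -1 is the orientation *)
Definition Delta (sg : R) (m Iv : body -> R) : R := sg * sqrt (heron m Iv) / 4.

Definition Cc (m Iv : body -> R) (i : body) : R :=
  let j := nxt i in let k := nxt j in
  - m i * Iv i + m j * Iv j + m k * Iv k.

(* omega_i^0 (cyclic version of the formula for omega_1^0) *)
Definition omega0 (sg : R) (m Iv dIv : body -> R) (i : body) : R :=
  let j := nxt i in let k := nxt j in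
  ((Cc m Iv k * Iv k - Cc m Iv j * Iv j) * (dIv i / Iv i)
   - (Cc m Iv i + 2 * m j * Iv k) * dIv j
   + (Cc m Iv i + 2 * m k * Iv j) * dIv k)
  / (8 * m B1 * m B2 * m B3 * Delta sg m Iv * Itot Iv).

Definition omega (Om sg : R) (m Iv dIv : body -> R) (i : body) : R :=
  omega0 sg m Iv dIv i + Om / Itot Iv.

Definition Tkin (Om sg : R) (m Iv dIv : body -> R) (i : body) : R :=
  (dIv i) ^ 2 / (8 * Iv i) + / 2 * (omega Om sg m Iv dIv i) ^ 2 * Iv i.

Definition reduced_rhs (Om sg : R) (m Iv dIv : body -> R) (i : body) : R :=
  let j := nxt i in let k := nxt j in
  4 * Tkin Om sg m Iv dIv i
  - ((m i + 2 * m j) / (r_next m Iv i) ^ 3 + (m i + 2 * m k) / (r_prev m Iv i) ^ 3) * Iv i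
  - (/ (r_next m Iv i) ^ 3 - / (r_prev m Iv i) ^ 3) * (m j * Iv j - m k * Iv k).

Definition reduced_solution (m : body -> R) (Om sg : R) (lo hi : Rbar)
    (Ic : body -> R -> R) : Prop :=
  forall t, in_J lo hi t ->
    (forall i, 0 < Ic i t) /\
    (forall i, 0 < rsq_opp m (at_time Ic t) i) /\
    0 < heron m (at_time Ic t) /\
    (forall i,
       ex_derive (Ic i) t /\
       is_derive (fun s => Derive (Ic i) s) t
         (reduced_rhs Om sg m (at_time Ic t) (fun j => Derive (Ic j) t) i)).

(* Main.v *)
Require Import Defs.
From Stdlib Require Import Reals.
From Coquelicot Require Import Coquelicot.
Open Scope R_scope.
From Stdlib Require Import Lra FunctionalExtensionality.
Notation B1 := Defs.B1.
Notation Delta := Defs.Delta.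
Notation dist := Defs.dist.
Notation omega := Defs.omega.

Definition Ivp (m px py : body -> R) : body -> R := fun i => m i * (px i ^ 2 + py i ^ 2).
Definition dIvp (m px py vx vy : body -> R) : body -> R :=
  fun i => 2 * m i * (px i * vx i + py i * vy i).
Definition Omp (m px py vx vy : body -> R) : R :=
  sum3 (fun i => m i * (px i * vy i - py i * vx i)).

Ltac elim3 m px :=
  let H := fresh in
  assert (H : px B3 = - (m B1 * px B1 + m B2 * px B2) / m B3) by (field; lra);
  rewrite H in *; clear H.

Lemma K1 (m px py : body -> R) (i : body) :
  masses_ok m -> com0 m px py ->
  rsq_opp m (Ivp m px py) i =
   (px (nxt i) - px (nxt (nxt i))) ^ 2 + (py (nxt i) - py (nxt (nxt i))) ^ 2.
Proof.
intros [Hm Hs] [Hx Hy]; unfold sum3 in *.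
pose proof (Hm B1); pose proof (Hm B2); pose proof (Hm B3).
assert (Px : px B3 = - (m B1 * px B1 + m B2 * px B2) / m B3) by (field_simplify_eq; lra).
assert (Py : py B3 = - (m B1 * py B1 + m B2 * py B2) / m B3) by (field_simplify_eq; lra).
assert (Em : m B3 = 1 - m B1 - m B2) by lra.
unfold rsq_opp, Itot, Ivp, sum3.
destruct i; cbn [nxt]; rewrite Px, Py; rewrite Em; field; lra.
Qed.

Ltac nzk1 G H d := let E := fresh "E" in
  intro E; apply H; transitivity (G / d); [field; lra | rewrite E; field; lra].
Ltac nzk G H c :=
  first [ nzk1 G H 1 | nzk1 G H c | nzk1 G H (c^2) | nzk1 G H (c^3) | nzk1 G H (c^4)
        | nzk1 G H 2 | nzk1 G H (2*c) | nzk1 G H (2*c^2) | nzk1 G H (2*c^3) ].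
Ltac nz c := match goal with
  | |- ?G <> 0 => first [ lra | match goal with H : _ <> 0 |- _ => nzk G H c end ]
  end.

Ltac prep m px py :=
  match goal with
  | Hmo : masses_ok m, Hc : com0 m px py |- _ =>
    let Hm := fresh "Hm" in let Hs := fresh "Hs" in
    let Hx := fresh in let Hy := fresh in
    destruct Hmo as [Hm Hs]; destruct Hc as [Hx Hy]; unfold sum3 in Hs, Hx, Hy;
    pose proof (Hm B1); pose proof (Hm B2); pose proof (Hm B3);
    let Px := fresh "Px" in let Py := fresh "Py" in
    assert (Px : px B3 = - (m B1 * px B1 + m B2 * px B2) / m B3) by (field_simplify_eq; lra);
    assert (Py : py B3 = - (m B1 * py B1 + m B2 * py B2) / m B3) by (field_simplify_eq; lra);
    clear Hx Hy
  end.

Lemma K2 (m px py : body -> R) :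
  masses_ok m -> com0 m px py ->
  heron m (Ivp m px py) = 16 * (signed_area px py) ^ 2.
Proof.
intros Hmo Hc. prep m px py.
assert (Em : m B3 = 1 - m B1 - m B2) by lra.
unfold heron, rsq_opp, Itot, Ivp, sum3, signed_area. cbn [nxt].
rewrite Px, Py; rewrite Em; field; lra.
Qed.

Lemma Delta_sa (m px py : body -> R) sg :
  masses_ok m -> com0 m px py -> (sg = 1 \/ sg = -1) -> 0 < sg * signed_area px py ->
  Delta sg m (Ivp m px py) = signed_area px py.
Proof.
intros Hmo Hc Hsg Hp. unfold Delta. rewrite K2 by auto.
replace (16 * signed_area px py ^ 2) with ((4 * (sg * signed_area px py)) ^ 2)
  by (destruct Hsg; subst; ring).
rewrite sqrt_pow2 by lra.
destruct Hsg; subst; field.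
Qed.

Lemma K3 (m px py vx vy : body -> R) sg i :
  masses_ok m -> com0 m px py -> com0 m vx vy -> (sg = 1 \/ sg = -1) ->
  0 < sg * signed_area px py -> px i ^ 2 + py i ^ 2 <> 0 -> Itot (Ivp m px py) <> 0 ->
  omega (Omp m px py vx vy) sg m (Ivp m px py) (dIvp m px py vx vy) i
  = (px i * vy i - py i * vx i) / (px i ^ 2 + py i ^ 2).
Proof.
intros Hmo Hc Hv Hsg Hp Hpi HI.
unfold omega, omega0. rewrite Delta_sa by auto.
assert (HA : signed_area px py <> 0) by (intro E; rewrite E in Hp; lra).
pose proof Hmo as Hmo'.
prep m vx vy. rename Px into Vx, Py into Vy.
prep m px py.
assert (Em : m B3 = 1 - m B1 - m B2) by lra.
unfold Cc, Itot, Ivp, dIvp, Omp, sum3, signed_area in *.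
destruct i; cbn [nxt] in *; rewrite ?Px, ?Py, ?Vx, ?Vy in *; rewrite Em in *;
 field; repeat split; nz (1 - m B1 - m B2).
Qed.

Lemma sa_cross (m px py : body -> R) :
  masses_ok m -> com0 m px py ->
  2 * signed_area px py * m B3 = px B1 * py B2 - py B1 * px B2 /\
  2 * signed_area px py * m B1 = px B2 * py B3 - py B2 * px B3.
Proof.
intros Hmo Hc. prep m px py. unfold signed_area.
assert (Em : m B3 = 1 - m B1 - m B2) by lra.
rewrite Px, Py; rewrite Em; split; field; lra.
Qed.

Lemma p_nz (m px py : body -> R) i :
  masses_ok m -> com0 m px py -> signed_area px py <> 0 -> px i ^ 2 + py i ^ 2 <> 0.
Proof.
intros Hmo Hc HA E.
destruct (sa_cross m px py Hmo Hc) as [S1 S2].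
assert (px i = 0 /\ py i = 0) as [E1 E2] by (split; nra).
destruct Hmo as [Hm _]. pose proof (Hm B1); pose proof (Hm B3).
apply HA. destruct i.
- rewrite E1, E2 in S1. nra.
- rewrite E1, E2 in S1. nra.
- rewrite E1, E2 in S2. nra.
Qed.

Lemma Itot_pos (m px py : body -> R) :
  masses_ok m -> com0 m px py -> signed_area px py <> 0 -> 0 < Itot (Ivp m px py).
Proof.
intros Hmo Hc HA.
pose proof (p_nz m px py B1 Hmo Hc HA).
destruct Hmo as [Hm _]. pose proof (Hm B1); pose proof (Hm B2); pose proof (Hm B3).
unfold Itot, Ivp, sum3.
assert (0 < px B1 ^ 2 + py B1 ^ 2) by (pose proof (pow2_ge_0 (px B1)); pose proof (pow2_ge_0 (py B1)); lra).
pose proof (pow2_ge_0 (px B2)); pose proof (pow2_ge_0 (py B2));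
pose proof (pow2_ge_0 (px B3)); pose proof (pow2_ge_0 (py B3)).
assert (0 < m B1 * (px B1 ^ 2 + py B1 ^ 2)) by (apply Rmult_lt_0_compat; lra).
assert (0 <= m B2 * (px B2 ^ 2 + py B2 ^ 2)) by (apply Rmult_le_pos; lra).
assert (0 <= m B3 * (px B3 ^ 2 + py B3 ^ 2)) by (apply Rmult_le_pos; lra).
lra.
Qed.

Lemma dist_pos3 (px py : body -> R) i j :
  signed_area px py <> 0 -> i <> j -> 0 < dist px py i j.
Proof.
intros HA Hij. unfold dist. apply sqrt_lt_R0.
destruct (Req_dec (px i) (px j)) as [Ex|Ex].
2:{ assert (0 < (px i - px j) ^ 2) by (apply pow2_gt_0; lra).
    pose proof (pow2_ge_0 (py i - py j)); lra. }
destruct (Req_dec (py i) (py j)) as [Ey|Ey].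
2:{ assert (0 < (py i - py j) ^ 2) by (apply pow2_gt_0; lra).
    pose proof (pow2_ge_0 (px i - px j)); lra. }
exfalso; apply HA; unfold signed_area.
destruct i, j; try congruence; rewrite ?Ex, ?Ey; field.
Qed.

Lemma rnext_dist (m px py : body -> R) i :
  masses_ok m -> com0 m px py -> r_next m (Ivp m px py) i = dist px py i (nxt i).
Proof.
intros Hmo Hc. unfold r_next, dist. rewrite K1 by auto. f_equal.
destruct i; cbn [nxt]; ring.
Qed.

Lemma rprev_dist (m px py : body -> R) i :
  masses_ok m -> com0 m px py -> r_prev m (Ivp m px py) i = dist px py i (nxt (nxt i)).
Proof.
intros Hmo Hc. unfold r_prev, dist. rewrite K1 by auto. f_equal.
destruct i; cbn [nxt]; ring.
Qed.

Lemma K4 (m px py vx vy : body -> R) sg i :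
  masses_ok m -> com0 m px py -> com0 m vx vy -> (sg = 1 \/ sg = -1) ->
  0 < sg * signed_area px py ->
  reduced_rhs (Omp m px py vx vy) sg m (Ivp m px py) (dIvp m px py vx vy) i
  = 2 * m i * (vx i ^ 2 + vy i ^ 2)
    + 2 * (px i * force_x m px py i + py i * force_y m px py i).
Proof.
intros Hmo Hc Hv Hsg Hp.
assert (HA : signed_area px py <> 0) by (intro E; rewrite E in Hp; lra).
assert (Hpi := p_nz m px py i Hmo Hc HA).
assert (HI := Itot_pos m px py Hmo Hc HA).
unfold reduced_rhs, Tkin. rewrite K3 by (auto; lra).
rewrite rnext_dist, rprev_dist by auto.
unfold force_x, force_y.
assert (Ha : 0 < dist px py i (nxt i)) by (apply dist_pos3; auto; destruct i; discriminate).
assert (Hb : 0 < dist px py i (nxt (nxt i))) by (apply dist_pos3; auto; destruct i; discriminate).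
set (a := dist px py i (nxt i)) in *. set (b := dist px py i (nxt (nxt i))) in *.
clearbody a b.
pose proof Hmo as Hmo'.
prep m vx vy. rename Px into Vx, Py into Vy.
prep m px py.
assert (Em : m B3 = 1 - m B1 - m B2) by lra.
unfold Itot, Ivp, dIvp, Omp, sum3 in *.
destruct i; cbn [nxt] in *; rewrite ?Px, ?Py, ?Vx, ?Vy in *; rewrite Em in *;
 field; repeat split; nz (1 - m B1 - m B2).
Qed.

Lemma dist_sym (px py : body -> R) i j : dist px py i j = dist px py j i.
Proof. unfold dist. f_equal. ring. Qed.

Lemma force_sums (m px py : body -> R) :
  signed_area px py <> 0 ->
  sum3 (force_x m px py) = 0 /\ sum3 (force_y m px py) = 0 /\
  sum3 (fun i => px i * force_y m px py i - py i * force_x m px py i) = 0.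
Proof.
intro HA.
assert (H12 : 0 < dist px py B1 B2) by (apply dist_pos3; auto; discriminate).
assert (H13 : 0 < dist px py B1 B3) by (apply dist_pos3; auto; discriminate).
assert (H23 : 0 < dist px py B2 B3) by (apply dist_pos3; auto; discriminate).
unfold sum3, force_x, force_y; cbn [nxt].
rewrite (dist_sym px py B2 B1), (dist_sym px py B3 B1), (dist_sym px py B3 B2).
set (a := dist px py B1 B2) in *. set (b := dist px py B1 B3) in *.
set (c := dist px py B2 B3) in *. clearbody a b c.
repeat split; field; repeat split; lra.
Qed.

Lemma perp_decomp x y ex ey : x ^ 2 + y ^ 2 <> 0 -> x * ex + y * ey = 0 ->
  ex = - ((x * ey - y * ex) / (x ^ 2 + y ^ 2)) * y /\
  ey = ((x * ey - y * ex) / (x ^ 2 + y ^ 2)) * x.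
Proof.
intros Hn H.
assert (A1 : ex * (x ^ 2 + y ^ 2) = - (x * ey - y * ex) * y).
{ replace (ex * (x ^ 2 + y ^ 2)) with (x * (x * ex + y * ey) - x * y * ey + ex * y ^ 2) by ring.
  rewrite H; ring. }
assert (A2 : ey * (x ^ 2 + y ^ 2) = (x * ey - y * ex) * x).
{ replace (ey * (x ^ 2 + y ^ 2)) with (y * (x * ex + y * ey) - x * y * ex + ey * x ^ 2) by ring.
  rewrite H; ring. }
split.
- transitivity (ex * (x ^ 2 + y ^ 2) / (x ^ 2 + y ^ 2)); [field; auto|].
  rewrite A1; field; auto.
- transitivity (ey * (x ^ 2 + y ^ 2) / (x ^ 2 + y ^ 2)); [field; auto|].
  rewrite A2; field; auto.
Qed.

Lemma LA (m px py ex ey : body -> R) :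
  masses_ok m -> com0 m px py -> signed_area px py <> 0 ->
  (forall i, px i * ex i + py i * ey i = 0) ->
  sum3 ex = 0 -> sum3 ey = 0 ->
  sum3 (fun i => px i * ey i - py i * ex i) = 0 ->
  forall i, ex i = 0 /\ ey i = 0.
Proof.
intros Hmo Hc HA Hd Sx Sy St.
assert (N1 := p_nz m px py B1 Hmo Hc HA).
assert (N2 := p_nz m px py B2 Hmo Hc HA).
assert (HI := Itot_pos m px py Hmo Hc HA).
destruct (sa_cross m px py Hmo Hc) as [S1 _].
destruct (perp_decomp _ _ _ _ N1 (Hd B1)) as [E1x E1y].
destruct (perp_decomp _ _ _ _ N2 (Hd B2)) as [E2x E2y].
set (l1 := (px B1 * ey B1 - py B1 * ex B1) / (px B1 ^ 2 + py B1 ^ 2)) in *.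
set (l2 := (px B2 * ey B2 - py B2 * ex B2) / (px B2 ^ 2 + py B2 ^ 2)) in *.
clearbody l1 l2.
unfold sum3 in Sx, Sy, St.
assert (E3x : ex B3 = l1 * py B1 + l2 * py B2) by lra.
assert (E3y : ey B3 = - l1 * px B1 - l2 * px B2) by lra.
pose proof (Hd B3) as D3.
rewrite E3x, E3y in D3. rewrite E1x, E1y, E2x, E2y, E3x, E3y in St.
unfold Itot, Ivp, sum3 in HI.
prep m px py.
rewrite Px, Py in D3, St, HI.
assert (Hcr : px B1 * py B2 - py B1 * px B2 <> 0).
{ rewrite <- S1. apply Rmult_integral_contrapositive; split; [|lra].
  apply Rmult_integral_contrapositive; split; [lra|auto]. }
assert (L : m B2 * l1 = m B1 * l2).
{ assert (D3' : (m B2 * l1 - m B1 * l2) * (px B1 * py B2 - py B1 * px B2) = 0).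
  { match type of D3 with ?L = 0 =>
      transitivity (L * m B3); [field; lra | rewrite D3; ring] end. }
  apply Rmult_integral in D3'. destruct D3' as [D|D]; [lra|contradiction]. }
assert (Hl2 : l2 = m B2 * l1 / m B1) by (field_simplify_eq; lra).
rewrite Hl2 in St.
match type of HI with 0 < ?I =>
  assert (Hz : l1 * I = 0) by
   (match type of St with ?L = 0 =>
      transitivity (m B1 * L); [field; lra | rewrite St; ring] end) end.
apply Rmult_integral in Hz. destruct Hz as [Hz|Hz]; [|lra].
assert (Z2 : l2 = 0) by (rewrite Hl2, Hz; field; lra).
intro i; destruct i.
- rewrite E1x, E1y, Hz; split; ring.
- rewrite E2x, E2y, Z2; split; ring.
- rewrite E3x, E3y, Hz, Z2; split; ring.
Qed.

Definition rho1 (m Iv : body -> R) := sqrt (Iv B1 / m B1).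
Definition d12 (m Iv : body -> R) :=
  (m B3 * Iv B3 - m B1 * Iv B1 - m B2 * Iv B2) / (2 * m B1 * m B2).
Definition qx (sg : R) (m Iv : body -> R) (i : body) : R :=
  match i with
  | Defs.B1 => rho1 m Iv
  | B2 => d12 m Iv / rho1 m Iv
  | B3 => - (m B1 * rho1 m Iv + m B2 * (d12 m Iv / rho1 m Iv)) / m B3
  end.
Definition qy (sg : R) (m Iv : body -> R) (i : body) : R :=
  match i with
  | Defs.B1 => 0
  | B2 => 2 * m B3 * Delta sg m Iv / rho1 m Iv
  | B3 => - (m B2 * (2 * m B3 * Delta sg m Iv / rho1 m Iv)) / m B3
  end.

Lemma rho1_pos m Iv : masses_ok m -> 0 < Iv B1 -> 0 < rho1 m Iv.
Proof.
intros [Hm _] H. unfold rho1. apply sqrt_lt_R0.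
pose proof (Hm B1). unfold Rdiv. apply Rmult_lt_0_compat; auto. apply Rinv_0_lt_compat; auto.
Qed.

Lemma rho1_sq m Iv : masses_ok m -> 0 < Iv B1 -> rho1 m Iv ^ 2 = Iv B1 / m B1.
Proof.
intros [Hm _] H. unfold rho1. rewrite <- Rsqr_pow2, Rsqr_sqrt; auto.
pose proof (Hm B1). unfold Rdiv. apply Rmult_le_pos; [lra|]. left; apply Rinv_0_lt_compat; auto.
Qed.

Lemma Delta_sq sg m Iv : (sg = 1 \/ sg = -1) -> 0 <= heron m Iv ->
  Delta sg m Iv ^ 2 = heron m Iv / 16.
Proof.
intros Hsg H. unfold Delta.
replace ((sg * sqrt (heron m Iv) / 4) ^ 2) with (sg ^ 2 * (sqrt (heron m Iv)) ^ 2 / 16) by field.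
rewrite <- (Rsqr_pow2 (sqrt _)), Rsqr_sqrt by auto.
destruct Hsg; subst; field.
Qed.

Lemma Q_com sg m Iv : masses_ok m -> 0 < Iv B1 -> com0 m (qx sg m Iv) (qy sg m Iv).
Proof.
intros Hmo H. pose proof (rho1_pos m Iv Hmo H). destruct Hmo as [Hm _].
pose proof (Hm B1); pose proof (Hm B2); pose proof (Hm B3).
unfold com0, sum3, qx, qy; split; field; lra.
Qed.

Lemma Q_I sg m Iv i : masses_ok m -> (sg = 1 \/ sg = -1) -> 0 < Iv B1 -> 0 <= heron m Iv ->
  m i * (qx sg m Iv i ^ 2 + qy sg m Iv i ^ 2) = Iv i.
Proof.
intros Hmo Hsg H Hh. pose proof (rho1_pos m Iv Hmo H) as Hr.
pose proof (rho1_sq m Iv Hmo H) as Hr2. pose proof (Delta_sq sg m Iv Hsg Hh) as HD.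
destruct Hmo as [Hm Hs]. unfold sum3 in Hs.
pose proof (Hm B1); pose proof (Hm B2); pose proof (Hm B3).
destruct i; unfold qx, qy, d12; cbv beta iota;
set (r := rho1 m Iv) in *; set (D := Delta sg m Iv) in *; clearbody r D.
- rewrite Hr2. field. lra.
- transitivity (m B2 * ((m B3 * Iv B3 - m B1 * Iv B1 - m B2 * Iv B2) ^ 2 / (2 * m B1 * m B2) ^ 2
                 + 4 * m B3 ^ 2 * D ^ 2) / r ^ 2); [field; split; lra|].
  rewrite Hr2, HD. unfold heron, rsq_opp, Itot, sum3; cbn [nxt].
  assert (Em : m B3 = 1 - m B1 - m B2) by lra. rewrite Em. field. lra.
- set (d := (m B3 * Iv B3 - m B1 * Iv B1 - m B2 * Iv B2) / (2 * m B1 * m B2)).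
  transitivity ((m B1 ^ 2 * r ^ 2 + 2 * m B1 * m B2 * d
     + m B2 ^ 2 * (d ^ 2 + 4 * m B3 ^ 2 * D ^ 2) / r ^ 2) / m B3); [field; split; lra|].
  rewrite Hr2, HD. unfold d, heron, rsq_opp, Itot, sum3; cbn [nxt].
  assert (Em : m B3 = 1 - m B1 - m B2) by lra. rewrite Em. field. lra.
Qed.

Lemma Q_area sg m Iv : masses_ok m -> 0 < Iv B1 ->
  signed_area (qx sg m Iv) (qy sg m Iv) = Delta sg m Iv.
Proof.
intros Hmo H. pose proof (rho1_pos m Iv Hmo H) as Hr.
destruct Hmo as [Hm Hs]. unfold sum3 in Hs.
pose proof (Hm B1); pose proof (Hm B2); pose proof (Hm B3).
unfold signed_area, qx, qy.
set (r := rho1 m Iv) in *; set (D := Delta sg m Iv) in *; clearbody r D.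
assert (Em : m B3 = 1 - m B1 - m B2) by lra. rewrite Em. field. lra.
Qed.

Definition D1 (J : R -> Prop) (f : R -> R) := forall t, J t -> ex_derive f t.
Definition TD (J : R -> Prop) (f : R -> R) := D1 J f /\ D1 J (Derive f).
Definition OpenJ (J : R -> Prop) := forall t, J t -> locally t J.

Section D1s.
Variable J : R -> Prop.

Lemma D1_const c : D1 J (fun _ => c).
Proof. intros t _. apply ex_derive_const. Qed.
Lemma D1_plus f g : D1 J f -> D1 J g -> D1 J (fun t => f t + g t).
Proof. intros Hf Hg t Ht. apply (ex_derive_plus f g); auto. Qed.
Lemma D1_opp f : D1 J f -> D1 J (fun t => - f t).
Proof. intros Hf t Ht. apply (ex_derive_opp f); auto. Qed.
Lemma D1_minus f g : D1 J f -> D1 J g -> D1 J (fun t => f t - g t).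
Proof. intros Hf Hg t Ht. apply (ex_derive_minus f g); auto. Qed.
Lemma D1_mult f g : D1 J f -> D1 J g -> D1 J (fun t => f t * g t).
Proof. intros Hf Hg t Ht. apply (ex_derive_mult f g); auto. Qed.
Lemma D1_inv f : D1 J f -> (forall t, J t -> f t <> 0) -> D1 J (fun t => / f t).
Proof. intros Hf Hn t Ht. apply (ex_derive_inv f); auto. Qed.
Lemma D1_div f g : D1 J f -> D1 J g -> (forall t, J t -> g t <> 0) -> D1 J (fun t => f t / g t).
Proof. intros Hf Hg Hn. unfold Rdiv. apply D1_mult; auto. apply D1_inv; auto. Qed.
Lemma D1_pow f n : D1 J f -> D1 J (fun t => f t ^ n).
Proof. intros Hf t Ht. destruct (Hf t Ht) as [l Hl]. eexists. apply (is_derive_pow f n t l Hl). Qed.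
Lemma D1_sqrt f : D1 J f -> (forall t, J t -> 0 < f t) -> D1 J (fun t => sqrt (f t)).
Proof. intros Hf Hp t Ht. destruct (Hf t Ht) as [l Hl]. eexists. apply (is_derive_sqrt f t l Hl); auto. Qed.
Lemma D1_cos f : D1 J f -> D1 J (fun t => cos (f t)).
Proof. intros Hf t Ht. apply (ex_derive_comp cos f); auto. eexists; apply is_derive_cos. Qed.
Lemma D1_sin f : D1 J f -> D1 J (fun t => sin (f t)).
Proof. intros Hf t Ht. apply (ex_derive_comp sin f); auto. eexists; apply is_derive_sin. Qed.

Hypothesis HJ : OpenJ J.

Lemma D1_ext f g : (forall s, J s -> f s = g s) -> D1 J g -> D1 J f.
Proof.
intros E Hg t Ht. apply (ex_derive_ext_loc g f t); auto.
apply (filter_imp J); auto. intros; symmetry; auto.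
Qed.

Lemma Derive_loc f g t : J t -> (forall s, J s -> f s = g s) -> Derive f t = Derive g t.
Proof.
intros Ht E. apply Derive_ext_loc. apply (filter_imp J); auto.
Qed.

Lemma TD_const c : TD J (fun _ => c).
Proof.
split; [apply D1_const|]. apply D1_ext with (fun _ => 0); [|apply D1_const].
intros s _. apply is_derive_unique, (is_derive_const c).
Qed.

Lemma TD_plus f g : TD J f -> TD J g -> TD J (fun t => f t + g t).
Proof.
intros [Hf Df] [Hg Dg]. split; [apply D1_plus; auto|].
apply D1_ext with (fun s => Derive f s + Derive g s); [|apply D1_plus; auto].
intros s Hs. apply is_derive_unique.
apply (is_derive_plus f g); apply Derive_correct; auto.
Qed.

Lemma TD_opp f : TD J f -> TD J (fun t => - f t).
Proof.
intros [Hf Df]. split; [apply D1_opp; auto|].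
apply D1_ext with (fun s => - Derive f s); [|apply D1_opp; auto].
intros s Hs. apply is_derive_unique.
apply (is_derive_opp f); apply Derive_correct; auto.
Qed.

Lemma TD_minus f g : TD J f -> TD J g -> TD J (fun t => f t - g t).
Proof.
intros [Hf Df] [Hg Dg]. split; [apply D1_minus; auto|].
apply D1_ext with (fun s => Derive f s - Derive g s); [|apply D1_minus; auto].
intros s Hs. apply is_derive_unique.
apply (is_derive_minus f g); apply Derive_correct; auto.
Qed.

Lemma TD_mult f g : TD J f -> TD J g -> TD J (fun t => f t * g t).
Proof.
intros [Hf Df] [Hg Dg]. split; [apply D1_mult; auto|].
apply D1_ext with (fun s => Derive f s * g s + f s * Derive g s);
  [|apply D1_plus; apply D1_mult; auto].
intros s Hs. apply is_derive_unique.
apply (is_derive_mult f g); try apply Derive_correct; auto.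
intros; apply Rmult_comm.
Qed.

Lemma TD_inv f : TD J f -> (forall t, J t -> f t <> 0) -> TD J (fun t => / f t).
Proof.
intros [Hf Df] Hn. split; [apply D1_inv; auto|].
apply D1_ext with (fun s => - Derive f s / f s ^ 2).
- intros s Hs. apply is_derive_unique.
  apply (is_derive_inv f); try apply Derive_correct; auto.
- apply D1_div; [apply D1_opp; auto| apply D1_pow; auto|].
  intros t Ht. apply pow_nonzero; auto.
Qed.

Lemma TD_div f g : TD J f -> TD J g -> (forall t, J t -> g t <> 0) -> TD J (fun t => f t / g t).
Proof. intros Hf Hg Hn. unfold Rdiv. apply TD_mult; auto. apply TD_inv; auto. Qed.

Lemma TD_pow f n : TD J f -> TD J (fun t => f t ^ n).
Proof.
intros [Hf Df]. split; [apply D1_pow; auto|].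
apply D1_ext with (fun s => INR n * Derive f s * f s ^ Init.Nat.pred n).
- intros s Hs. apply is_derive_unique.
  apply (is_derive_pow f); apply Derive_correct; auto.
- apply D1_mult; [apply D1_mult; [apply D1_const|auto]|apply D1_pow; auto].
Qed.

Lemma TD_sqrt f : TD J f -> (forall t, J t -> 0 < f t) -> TD J (fun t => sqrt (f t)).
Proof.
intros [Hf Df] Hp. split; [apply D1_sqrt; auto|].
apply D1_ext with (fun s => Derive f s / (2 * sqrt (f s))).
- intros s Hs. apply is_derive_unique.
  apply (is_derive_sqrt f); try apply Derive_correct; auto.
- apply D1_div; auto.
  + apply D1_mult; [apply D1_const| apply D1_sqrt; auto].
  + intros t Ht. specialize (Hp t Ht). pose proof (sqrt_lt_R0 _ Hp). lra.
Qed.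

Lemma TD_cos f : TD J f -> TD J (fun t => cos (f t)).
Proof.
intros [Hf Df]. split; [apply D1_cos; auto|].
apply D1_ext with (fun s => - sin (f s) * Derive f s).
- intros s Hs.
  assert (H := is_derive_comp cos f s _ _ (is_derive_cos (f s)) (Derive_correct f s (Hf s Hs))).
  transitivity (scal (Derive f s) (- sin (f s))); [apply is_derive_unique; exact H|].
  unfold scal; simpl; unfold mult; simpl; ring.
- apply D1_mult; auto. apply D1_opp, D1_sin; auto.
Qed.

Lemma TD_sin f : TD J f -> TD J (fun t => sin (f t)).
Proof.
intros [Hf Df]. split; [apply D1_sin; auto|].
apply D1_ext with (fun s => cos (f s) * Derive f s).
- intros s Hs.
  assert (H := is_derive_comp sin f s _ _ (is_derive_sin (f s)) (Derive_correct f s (Hf s Hs))).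
  transitivity (scal (Derive f s) (cos (f s))); [apply is_derive_unique; exact H|].
  unfold scal; simpl; unfold mult; simpl; ring.
- apply D1_mult; auto. apply D1_cos; auto.
Qed.
End D1s.

Ltac eta_fix := repeat match goal with |- context [Derive (fun z => ?f z) ?t] =>
   progress change (Derive (fun z => f z) t) with (Derive f t) end.

Lemma inJ_open lo hi : OpenJ (in_J lo hi).
Proof.
intros t [H1 H2]. unfold in_J.
apply filter_and.
- apply (open_Rbar_gt' (Finite t) lo H1).
- apply (open_Rbar_lt' (Finite t) hi H2).
Qed.

Lemma inJ_conv lo hi a b c : in_J lo hi a -> in_J lo hi b -> a <= c <= b -> in_J lo hi c.
Proof.
unfold in_J; destruct lo, hi; simpl; intros; lra.
Qed.

Section Kin.
Variable m : body -> R.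
Variables x y : body -> R -> R.
Variable J : R -> Prop.
Hypothesis HJ : OpenJ J.

Lemma DImom i s : ex_derive (x i) s -> ex_derive (y i) s ->
  Derive (Imom m x y i) s = 2 * m i * (x i s * Derive (x i) s + y i s * Derive (y i) s).
Proof.
intros. apply is_derive_unique. unfold Imom. auto_derive; auto. eta_fix. ring.
Qed.

Lemma DDImom i t : J t -> TD J (x i) -> TD J (y i) ->
  is_derive (Derive (Imom m x y i)) t
   (2 * m i * (Derive (x i) t ^ 2 + x i t * Derive (Derive (x i)) t
               + Derive (y i) t ^ 2 + y i t * Derive (Derive (y i)) t)).
Proof.
intros Ht [Hx Dx] [Hy Dy].
apply (is_derive_ext_loc (fun s => 2 * m i * (x i s * Derive (x i) s + y i s * Derive (y i) s))).
- apply (filter_imp J); auto. intros s Hs. rewrite DImom; auto.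
- auto_derive; [repeat split; auto|]. eta_fix. ring.
Qed.

Lemma Dangmom t : J t -> (forall i, TD J (x i)) -> (forall i, TD J (y i)) ->
  is_derive (angmom m x y) t
   (sum3 (fun i => m i * (x i t * Derive (Derive (y i)) t - y i t * Derive (Derive (x i)) t))).
Proof.
intros Ht Hx Hy. unfold angmom, sum3.
assert (A := fun i => proj1 (Hx i) t Ht). assert (B := fun i => proj2 (Hx i) t Ht).
assert (C := fun i => proj1 (Hy i) t Ht). assert (D := fun i => proj2 (Hy i) t Ht).
auto_derive; [repeat split; auto|]. eta_fix. ring.
Qed.

Lemma vel_com t : J t -> (forall i, D1 J (x i)) -> (forall i, D1 J (y i)) ->
  (forall s, J s -> com0 m (at_time x s) (at_time y s)) ->
  com0 m (fun i => Derive (x i) t) (fun i => Derive (y i) t).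
Proof.
intros Ht Hx Hy Hc. unfold com0, sum3.
assert (A := fun i => Hx i t Ht). assert (C := fun i => Hy i t Ht).
split.
- transitivity (Derive (fun s => m B1 * x B1 s + m B2 * x B2 s + m B3 * x B3 s) t).
  + symmetry. apply is_derive_unique. auto_derive; [repeat split; auto|]. eta_fix. ring.
  + transitivity (Derive (fun _ : R => 0) t); [|apply Derive_const].
    apply (Derive_loc J HJ); auto.
    intros s Hs. destruct (Hc s Hs) as [H _]. exact H.
- transitivity (Derive (fun s => m B1 * y B1 s + m B2 * y B2 s + m B3 * y B3 s) t).
  + symmetry. apply is_derive_unique. auto_derive; [repeat split; auto|]. eta_fix. ring.
  + transitivity (Derive (fun _ : R => 0) t); [|apply Derive_const].
    apply (Derive_loc J HJ); auto.
    intros s Hs. destruct (Hc s Hs) as [_ H]. exact H.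
Qed.

End Kin.

Lemma acc_com m x y J t : OpenJ J -> J t -> (forall i, TD J (x i)) -> (forall i, TD J (y i)) ->
  (forall s, J s -> com0 m (at_time x s) (at_time y s)) ->
  com0 m (fun i => Derive (Derive (x i)) t) (fun i => Derive (Derive (y i)) t).
Proof.
intros HJ Ht Hx Hy Hc.
pose proof (vel_com m (fun i => Derive (x i)) (fun i => Derive (y i)) J HJ t Ht) as V.
cbv beta in V. apply V.
- intro i; apply (Hx i).
- intro i; apply (Hy i).
- intros s Hs. apply (vel_com m x y J HJ s Hs); auto.
  + intro i; apply (Hx i).
  + intro i; apply (Hy i).
Qed.

Lemma sq_pos_of_dist (px py : body -> R) i j : 0 < dist px py i j ->
  0 < (px i - px j) ^ 2 + (py i - py j) ^ 2.
Proof.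
unfold dist. intro H. destruct (Rle_lt_dec ((px i - px j) ^ 2 + (py i - py j) ^ 2) 0) as [L|L]; auto.
rewrite sqrt_neg_0 in H; lra.
Qed.

Lemma motion_TD m lo hi x y a b : is_motion m lo hi x y ->
  (forall t, in_J a b t -> in_J lo hi t) ->
  (forall i, TD (in_J a b) (x i)) /\ (forall i, TD (in_J a b) (y i)).
Proof.
intros Hm Hs. split; intro i; split; intros s Hj; destruct (Hm s (Hs s Hj)) as [_ [_ H]];
  destruct (H i) as [H1 [H2 [H3 H4]]]; eauto; eexists; eauto.
Qed.

Lemma rhs_eq m sg Om (x y : body -> R -> R) t i J :
  OpenJ J -> J t -> masses_ok m -> (sg = 1 \/ sg = -1) ->
  (forall i, TD J (x i)) -> (forall i, TD J (y i)) ->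
  (forall s, J s -> com0 m (at_time x s) (at_time y s)) ->
  0 < sg * signed_area (at_time x t) (at_time y t) ->
  angmom m x y t = Om ->
  reduced_rhs Om sg m (at_time (Imom m x y) t) (fun j => Derive (Imom m x y j) t) i
  = 2 * m i * (Derive (x i) t ^ 2 + Derive (y i) t ^ 2)
    + 2 * (x i t * force_x m (at_time x t) (at_time y t) i
           + y i t * force_y m (at_time x t) (at_time y t) i).
Proof.
intros HJ Ht Hmo Hsg Hx Hy Hc Hp HOm.
rewrite <- HOm.
replace (fun j => Derive (Imom m x y j) t)
  with (dIvp m (at_time x t) (at_time y t) (fun j => Derive (x j) t) (fun j => Derive (y j) t)).
2:{ apply functional_extensionality; intro j. rewrite DImom; [reflexivity| apply (Hx j) | apply (Hy j)]; auto. }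
change (at_time (Imom m x y) t) with (Ivp m (at_time x t) (at_time y t)).
change (angmom m x y t) with
  (Omp m (at_time x t) (at_time y t) (fun j => Derive (x j) t) (fun j => Derive (y j) t)).
rewrite K4; auto.
- apply (vel_com m x y J HJ t Ht); auto; intro j; [apply (Hx j)|apply (Hy j)].
Qed.

Lemma part2 m lo hi : masses_ok m ->
  forall (x y : body -> R -> R) (Om : R),
     is_motion m lo hi x y ->
     (forall t, in_J lo hi t -> angmom m x y t = Om) ->
     forall (a b : Rbar) (sg : R), (sg = 1 \/ sg = -1) ->
     (forall t, in_J a b t -> in_J lo hi t) ->
     (forall t, in_J a b t -> 0 < sg * signed_area (at_time x t) (at_time y t)) ->
     reduced_solution m Om sg a b (Imom m x y).
Proof.
intros Hmo x y Om Hm HOm a b sg Hsg Hsub Hp t Ht.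
pose proof (inJ_open a b) as HJ.
destruct (motion_TD m lo hi x y a b Hm Hsub) as [Tx Ty].
assert (Hc : forall s, in_J a b s -> com0 m (at_time x s) (at_time y s))
  by (intros s Hs; apply (Hm s (Hsub s Hs))).
assert (HA : signed_area (at_time x t) (at_time y t) <> 0)
  by (intro E; specialize (Hp t Ht); rewrite E in Hp; lra).
destruct (Hm t (Hsub t Ht)) as [_ [_ Hn]].
split; [|split; [|split]].
- intro i. pose proof (p_nz m _ _ i Hmo (Hc t Ht) HA) as N.
  destruct Hmo as [Hmp _]. specialize (Hmp i). unfold Imom.
  apply Rmult_lt_0_compat; auto. unfold at_time in N.
  pose proof (pow2_ge_0 (x i t)); pose proof (pow2_ge_0 (y i t)).
  destruct (Req_dec (x i t ^ 2 + y i t ^ 2) 0); [contradiction|lra].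
- intro i. change (at_time (Imom m x y) t) with (Ivp m (at_time x t) (at_time y t)).
  rewrite K1 by auto. apply sq_pos_of_dist, dist_pos3; auto. destruct i; discriminate.
- change (at_time (Imom m x y) t) with (Ivp m (at_time x t) (at_time y t)).
  rewrite K2 by auto. pose proof (pow2_gt_0 _ HA). lra.
- intro i. destruct (Hn i) as [Ex [Ey [Dx Dy]]]. split.
  + unfold Imom. auto_derive. auto.
  + pose proof (DDImom m x y (in_J a b) HJ i t Ht (Tx i) (Ty i)) as D.
    rewrite (rhs_eq m sg Om x y t i (in_J a b)); auto.
    replace (Derive (Derive (x i)) t) with (force_x m (at_time x t) (at_time y t) i / m i) in D
      by (symmetry; apply is_derive_unique; exact Dx).
    replace (Derive (Derive (y i)) t) with (force_y m (at_time x t) (at_time y t) i / m i) in D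
      by (symmetry; apply is_derive_unique; exact Dy).
    assert (Hmi : m i <> 0) by (destruct Hmo as [Hmp _]; specialize (Hmp i); lra).
    match type of D with is_derive _ _ ?V => replace (_ + _) with V end; [exact D|].
    field. exact Hmi.
Qed.

Lemma seg_in_J lo hi t0 t : in_J lo hi t0 -> in_J lo hi t ->
  forall z, Rmin t0 t <= z <= Rmax t0 t -> in_J lo hi z.
Proof.
intros H0 H1 z Hz. destruct (Rle_dec t0 t).
- rewrite Rmin_left, Rmax_right in Hz by lra. apply (inJ_conv lo hi t0 t); auto.
- rewrite Rmin_right, Rmax_left in Hz by lra. apply (inJ_conv lo hi t t0); auto.
Qed.

Lemma const_J lo hi f t0 t : in_J lo hi t0 -> in_J lo hi t ->
  (forall s, in_J lo hi s -> is_derive f s 0) -> f t = f t0.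
Proof.
intros H0 H1 Hd.
destruct (MVT_gen f t0 t (fun _ => 0)) as [c [_ Hc]].
- intros z Hz. apply Hd. apply (seg_in_J lo hi t0 t); auto; lra.
- intros z Hz. apply continuity_pt_filterlim.
  assert (E : ex_derive f z) by (eexists; apply Hd; apply (seg_in_J lo hi t0 t); auto).
  exact (ex_derive_continuous f z E).
- lra.
Qed.

Lemma Itot_pos2 (m px py : body -> R) : masses_ok m ->
  (px B1, py B1) <> (px B2, py B2) -> 0 < Itot (Ivp m px py).
Proof.
intros [Hm _] Hd. unfold Itot, Ivp, sum3.
pose proof (Hm B1); pose proof (Hm B2); pose proof (Hm B3).
destruct (Rle_lt_dec (m B1 * (px B1 ^ 2 + py B1 ^ 2) + m B2 * (px B2 ^ 2 + py B2 ^ 2) +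
   m B3 * (px B3 ^ 2 + py B3 ^ 2)) 0) as [L|L]; auto.
exfalso. apply Hd.
pose proof (pow2_ge_0 (px B1)); pose proof (pow2_ge_0 (py B1));
pose proof (pow2_ge_0 (px B2)); pose proof (pow2_ge_0 (py B2));
pose proof (pow2_ge_0 (px B3)); pose proof (pow2_ge_0 (py B3)).
assert (0 <= m B1 * (px B1 ^ 2 + py B1 ^ 2)) by (apply Rmult_le_pos; lra).
assert (0 <= m B2 * (px B2 ^ 2 + py B2 ^ 2)) by (apply Rmult_le_pos; lra).
assert (0 <= m B3 * (px B3 ^ 2 + py B3 ^ 2)) by (apply Rmult_le_pos; lra).
assert (Z1 : m B1 * (px B1 ^ 2 + py B1 ^ 2) = 0) by lra.
assert (Z2 : m B2 * (px B2 ^ 2 + py B2 ^ 2) = 0) by lra.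
assert (px B1 ^ 2 + py B1 ^ 2 = 0) by (apply Rmult_integral in Z1; destruct Z1; lra).
assert (px B2 ^ 2 + py B2 ^ 2 = 0) by (apply Rmult_integral in Z2; destruct Z2; lra).
assert (px B1 = 0) by nra. assert (py B1 = 0) by nra.
assert (px B2 = 0) by nra. assert (py B2 = 0) by nra.
congruence.
Qed.

Ltac d1_leaf :=
  match goal with
  | T : forall i, TD ?J (?x i) |- D1 ?J (fun s => ?x ?i s) => exact (proj1 (T i))
  | T : forall i, TD ?J (?x i) |- D1 ?J (?x ?i) => exact (proj1 (T i))
  end.
Ltac d1 := repeat match goal with
 | |- D1 _ (fun _ => ?c) => apply D1_const
 | |- D1 _ (fun s => _ + _) => apply D1_plus
 | |- D1 _ (fun s => _ - _) => apply D1_minus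
 | |- D1 _ (fun s => _ * _) => apply D1_mult
 | |- D1 _ (fun s => - _) => apply D1_opp
 | |- D1 _ (fun s => _ / _) => apply D1_div
 | |- D1 _ (fun s => _ ^ _) => apply D1_pow
 | |- D1 _ _ => d1_leaf
 end.

Lemma part1 m lo hi t0 : masses_ok m -> in_J lo hi t0 ->
  (forall (x y x' y' : body -> R -> R) (Om : R),
     is_motion m lo hi x y -> is_motion m lo hi x' y' ->
     noncollinear (at_time x t0) (at_time y t0) ->
     (forall t, in_J lo hi t -> angmom m x y t = Om) ->
     (forall t, in_J lo hi t -> angmom m x' y' t = Om) ->
     (forall i, x' i t0 = x i t0 /\ y' i t0 = y i t0) ->
     same_moduli_curve lo hi x y x' y' ->
     forall t, in_J lo hi t -> forall i, x' i t = x i t /\ y' i t = y i t).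
Proof.
intros Hmo H0 x y x' y' Om Hm Hm' _ HO HO' Hinit Hsame.
pose proof (inJ_open lo hi) as HJ.
destruct (motion_TD m lo hi x y lo hi Hm (fun t H => H)) as [Tx Ty].
destruct (motion_TD m lo hi x' y' lo hi Hm' (fun t H => H)) as [Tx' Ty'].
set (It := fun s => m B1 * (x B1 s ^ 2 + y B1 s ^ 2) + m B2 * (x B2 s ^ 2 + y B2 s ^ 2)
                  + m B3 * (x B3 s ^ 2 + y B3 s ^ 2)).
assert (HIt : forall s, in_J lo hi s -> 0 < It s).
{ intros s Hs. change (It s) with (Itot (Ivp m (at_time x s) (at_time y s))).
  apply Itot_pos2; auto. destruct (Hm s Hs) as [_ [Hd _]]. apply Hd. discriminate. }
set (cf := fun s => (m B1 * (x B1 s * x' B1 s + y B1 s * y' B1 s)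
                   + m B2 * (x B2 s * x' B2 s + y B2 s * y' B2 s)
                   + m B3 * (x B3 s * x' B3 s + y B3 s * y' B3 s)) / It s).
set (sf := fun s => (m B1 * (x B1 s * y' B1 s - y B1 s * x' B1 s)
                   + m B2 * (x B2 s * y' B2 s - y B2 s * x' B2 s)
                   + m B3 * (x B3 s * y' B3 s - y B3 s * x' B3 s)) / It s).
assert (Rot : forall s, in_J lo hi s ->
   (forall i, x' i s = cf s * x i s - sf s * y i s /\ y' i s = sf s * x i s + cf s * y i s)
   /\ cf s ^ 2 + sf s ^ 2 = 1).
{ intros s Hs. destruct (Hsame s Hs) as [th Hth].
  assert (Hc : cf s = cos th /\ sf s = sin th).
  { pose proof (HIt s Hs) as P. unfold cf, sf, It in *.
    destruct (Hth B1) as [a1 b1]; destruct (Hth B2) as [a2 b2]; destruct (Hth B3) as [a3 b3].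
    rewrite a1, b1, a2, b2, a3, b3. split; field; lra. }
  destruct Hc as [-> ->]. split; [intro j; apply Hth|].
  pose proof (sin2_cos2 th) as S. unfold Rsqr in S. lra. }
assert (Dc : D1 (in_J lo hi) cf).
{ unfold cf. apply D1_div; [d1 | unfold It; d1 | intros s Hs; pose proof (HIt s Hs); lra]. }
assert (Ds : D1 (in_J lo hi) sf).
{ unfold sf. apply D1_div; [d1 | unfold It; d1 | intros s Hs; pose proof (HIt s Hs); lra]. }
assert (Dz : forall t, in_J lo hi t -> Derive cf t = 0 /\ Derive sf t = 0).
{ intros t Ht.
  destruct (Rot t Ht) as [Rv Hcs].
  assert (Ex := fun i => proj1 (Tx i) t Ht). assert (Ey := fun i => proj1 (Ty i) t Ht).
  assert (Ec := Dc t Ht). assert (Es := Ds t Ht).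
  assert (Dxp : forall i, Derive (x' i) t =
     Derive cf t * x i t + cf t * Derive (x i) t - (Derive sf t * y i t + sf t * Derive (y i) t)).
  { intro i. rewrite (Derive_loc (in_J lo hi) HJ (x' i) (fun s => cf s * x i s - sf s * y i s) t Ht).
    - apply is_derive_unique. auto_derive; [repeat split; auto|]. eta_fix. ring.
    - intros s Hs. apply (Rot s Hs). }
  assert (Dyp : forall i, Derive (y' i) t =
     Derive sf t * x i t + sf t * Derive (x i) t + (Derive cf t * y i t + cf t * Derive (y i) t)).
  { intro i. rewrite (Derive_loc (in_J lo hi) HJ (y' i) (fun s => sf s * x i s + cf s * y i s) t Ht).
    - apply is_derive_unique. auto_derive; [repeat split; auto|]. eta_fix. ring.
    - intros s Hs. apply (Rot s Hs). }
  assert (E : angmom m x' y' t = (cf t ^ 2 + sf t ^ 2) * angmom m x y t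
              + (cf t * Derive sf t - sf t * Derive cf t) * It t).
  { unfold angmom, sum3. rewrite !Dxp, !Dyp.
    rewrite (proj1 (Rv B1)), (proj2 (Rv B1)), (proj1 (Rv B2)), (proj2 (Rv B2)),
            (proj1 (Rv B3)), (proj2 (Rv B3)).
    unfold It. ring. }
  rewrite Hcs, HO, HO' in E by auto.
  assert (W : cf t * Derive sf t - sf t * Derive cf t = 0).
  { pose proof (HIt t Ht).
    assert (Z : (cf t * Derive sf t - sf t * Derive cf t) * It t = 0) by lra.
    apply Rmult_integral in Z; destruct Z; [auto|lra]. }
  assert (V : cf t * Derive cf t + sf t * Derive sf t = 0).
  { assert (DD : Derive (fun s => cf s ^ 2 + sf s ^ 2) t = 2 * (cf t * Derive cf t + sf t * Derive sf t)).
    { apply is_derive_unique. auto_derive; [repeat split; auto|]. eta_fix. ring. }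
    rewrite (Derive_loc (in_J lo hi) HJ _ (fun _ => 1) t Ht) in DD.
    - rewrite Derive_const in DD. lra.
    - intros s Hs. apply (Rot s Hs). }
  split.
  - transitivity (cf t * (cf t * Derive cf t + sf t * Derive sf t)
                  - sf t * (cf t * Derive sf t - sf t * Derive cf t)).
    + transitivity (Derive cf t * (cf t ^ 2 + sf t ^ 2)); [rewrite Hcs; ring | ring].
    + rewrite V, W; ring.
  - transitivity (sf t * (cf t * Derive cf t + sf t * Derive sf t)
                  + cf t * (cf t * Derive sf t - sf t * Derive cf t)).
    + transitivity (Derive sf t * (cf t ^ 2 + sf t ^ 2)); [rewrite Hcs; ring | ring].
    + rewrite V, W; ring. }
assert (Cc : forall t, in_J lo hi t -> cf t = cf t0 /\ sf t = sf t0).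
{ intros t Ht. split; apply (const_J lo hi); auto; intros s Hs.
  - rewrite <- (proj1 (Dz s Hs)). apply Derive_correct. auto.
  - rewrite <- (proj2 (Dz s Hs)). apply Derive_correct. auto. }
assert (C0 : cf t0 = 1 /\ sf t0 = 0).
{ pose proof (HIt t0 H0) as P. unfold cf, sf, It in *.
  destruct (Hinit B1) as [a1 b1]; destruct (Hinit B2) as [a2 b2]; destruct (Hinit B3) as [a3 b3].
  rewrite a1, b1, a2, b2, a3, b3. split; field; lra. }
intros t Ht i.
destruct (Rot t Ht) as [Rv _]. destruct (Rv i) as [-> ->].
destruct (Cc t Ht) as [-> ->]. destruct C0 as [-> ->]. split; ring.
Qed.

Lemma newton_struct m Om sg (Ic x y : body -> R -> R) J t :
  OpenJ J -> J t -> masses_ok m -> (sg = 1 \/ sg = -1) ->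
  (forall i, TD J (x i)) -> (forall i, TD J (y i)) ->
  (forall s, J s -> com0 m (at_time x s) (at_time y s)) ->
  (forall s, J s -> angmom m x y s = Om) ->
  0 < sg * signed_area (at_time x t) (at_time y t) ->
  (forall s, J s -> forall i, Imom m x y i s = Ic i s) ->
  (forall i, is_derive (fun s => Derive (Ic i) s) t
               (reduced_rhs Om sg m (at_time Ic t) (fun j => Derive (Ic j) t) i)) ->
  forall i, Derive (Derive (x i)) t = force_x m (at_time x t) (at_time y t) i / m i /\
            Derive (Derive (y i)) t = force_y m (at_time x t) (at_time y t) i / m i.
Proof.
intros HJ Ht Hmo Hsg Tx Ty Hc HO Hp HI HD.
assert (HA : signed_area (at_time x t) (at_time y t) <> 0) by (intro E; rewrite E in Hp; lra).
set (px := at_time x t). set (py := at_time y t).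
set (ex := fun i => m i * Derive (Derive (x i)) t - force_x m px py i).
set (ey := fun i => m i * Derive (Derive (y i)) t - force_y m px py i).
assert (Hmi : forall i, m i <> 0) by (intro i; destruct Hmo as [Hmp _]; specialize (Hmp i); lra).
assert (Edot : forall i, px i * ex i + py i * ey i = 0).
{ intro i.
  assert (E1 : at_time Ic t = at_time (Imom m x y) t).
  { apply functional_extensionality; intro j. unfold at_time. symmetry; apply HI; auto. }
  assert (E2 : (fun j => Derive (Ic j) t) = (fun j => Derive (Imom m x y j) t)).
  { apply functional_extensionality; intro j. apply (Derive_loc J HJ); auto.
    intros s Hs; symmetry; apply HI; auto. }
  pose proof (HD i) as D. rewrite E1, E2 in D.
  rewrite (rhs_eq m sg Om x y t i J HJ Ht Hmo Hsg Tx Ty Hc Hp (HO t Ht)) in D.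
  assert (D' : is_derive (Derive (Imom m x y i)) t
     (2 * m i * (Derive (x i) t ^ 2 + Derive (y i) t ^ 2) +
      2 * (x i t * force_x m (at_time x t) (at_time y t) i +
           y i t * force_y m (at_time x t) (at_time y t) i))).
  { apply (is_derive_ext_loc (fun s => Derive (Ic i) s)); [|exact D].
    apply (filter_imp J); auto. intros s Hs. apply (Derive_loc J HJ); auto.
    intros u Hu; symmetry; apply HI; auto. }
  pose proof (DDImom m x y J HJ i t Ht (Tx i) (Ty i)) as D2.
  pose proof (is_derive_unique _ _ _ D') as U1.
  pose proof (is_derive_unique _ _ _ D2) as U2.
  rewrite U1 in U2.
  unfold ex, ey, px, py, at_time in *.
  apply (Rmult_eq_reg_l 2); [|lra]. lra. }
assert (Acc := acc_com m x y J t HJ Ht Tx Ty Hc).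
destruct (force_sums m px py HA) as [Fx [Fy Ft]].
assert (Sx : sum3 ex = 0).
{ destruct Acc as [A _]. unfold sum3 in *. unfold ex. lra. }
assert (Sy : sum3 ey = 0).
{ destruct Acc as [_ A]. unfold sum3 in *. unfold ey. lra. }
assert (St : sum3 (fun i => px i * ey i - py i * ex i) = 0).
{ assert (Dg := Dangmom m x y J t Ht Tx Ty).
  assert (Z : Derive (angmom m x y) t = 0).
  { transitivity (Derive (fun _ : R => Om) t); [|apply Derive_const].
    apply (Derive_loc J HJ); auto. }
  rewrite (is_derive_unique _ _ _ Dg) in Z.
  unfold sum3 in *. unfold ex, ey, px, py, at_time in *. lra. }
assert (L := LA m px py ex ey Hmo (Hc t Ht) HA Edot Sx Sy St).
intro i. destruct (L i) as [L1 L2]. unfold ex, ey in L1, L2.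
split; apply (Rmult_eq_reg_l (m i)); auto; field_simplify; auto; lra.
Qed.

Lemma angle_exists c s : c ^ 2 + s ^ 2 = 1 -> exists th, cos th = c /\ sin th = s.
Proof.
intro H.
assert (Hc : -1 <= c <= 1) by (split; nra).
assert (Hs : 1 - c² = s * s) by (unfold Rsqr; lra).
destruct (Rle_dec 0 s) as [P|P].
- exists (acos c). split; [apply cos_acos; auto|].
  rewrite sin_acos by auto. rewrite Hs. apply sqrt_square; auto.
- exists (- acos c). rewrite cos_neg, sin_neg. split; [apply cos_acos; auto|].
  rewrite sin_acos by auto. rewrite Hs.
  replace (s * s) with ((- s) * (- s)) by ring. rewrite sqrt_square; lra.
Qed.

Lemma d12_dot m px py : masses_ok m -> com0 m px py ->
  d12 m (Ivp m px py) = px B1 * px B2 + py B1 * py B2.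
Proof.
intros Hmo Hc. prep m px py.
assert (Em : m B3 = 1 - m B1 - m B2) by lra.
unfold d12, Ivp. rewrite Px, Py. rewrite Em. field. lra.
Qed.

Lemma Q_init m sg x0 y0 : masses_ok m -> com0 m x0 y0 -> (sg = 1 \/ sg = -1) ->
  0 < sg * signed_area x0 y0 ->
  (x0 B1 / rho1 m (Ivp m x0 y0)) ^ 2 + (y0 B1 / rho1 m (Ivp m x0 y0)) ^ 2 = 1 /\
  forall i,
   (x0 B1 / rho1 m (Ivp m x0 y0)) * qx sg m (Ivp m x0 y0) i
     - (y0 B1 / rho1 m (Ivp m x0 y0)) * qy sg m (Ivp m x0 y0) i = x0 i /\
   (y0 B1 / rho1 m (Ivp m x0 y0)) * qx sg m (Ivp m x0 y0) i
     + (x0 B1 / rho1 m (Ivp m x0 y0)) * qy sg m (Ivp m x0 y0) i = y0 i.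
Proof.
intros Hmo Hc Hsg Hp.
assert (HA : signed_area x0 y0 <> 0) by (intro E; rewrite E in Hp; lra).
pose proof (p_nz m x0 y0 B1 Hmo Hc HA) as N1.
assert (P1 : 0 < x0 B1 ^ 2 + y0 B1 ^ 2).
{ pose proof (pow2_ge_0 (x0 B1)); pose proof (pow2_ge_0 (y0 B1)).
  destruct (Req_dec (x0 B1 ^ 2 + y0 B1 ^ 2) 0); [contradiction|lra]. }
assert (HI1 : 0 < Ivp m x0 y0 B1).
{ unfold Ivp. destruct Hmo as [Hm _]. apply Rmult_lt_0_compat; auto. }
pose proof (rho1_pos m _ Hmo HI1) as Hr.
pose proof (rho1_sq m _ Hmo HI1) as Hr2.
pose proof (Delta_sa m x0 y0 sg Hmo Hc Hsg Hp) as HD.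
pose proof (d12_dot m x0 y0 Hmo Hc) as Hd.
destruct (sa_cross m x0 y0 Hmo Hc) as [S1 _].
pose proof Hmo as Hmo'. destruct Hmo' as [Hm Hs]. unfold sum3 in Hs.
pose proof (Hm B1); pose proof (Hm B2); pose proof (Hm B3).
assert (Hr2' : rho1 m (Ivp m x0 y0) ^ 2 = x0 B1 ^ 2 + y0 B1 ^ 2).
{ rewrite Hr2. unfold Ivp. field. lra. }
clear Hr2.
destruct Hc as [Cx Cy]. unfold sum3 in Cx, Cy.
split.
{ set (r := rho1 m (Ivp m x0 y0)) in *. clearbody r.
  transitivity ((x0 B1 ^ 2 + y0 B1 ^ 2) / r ^ 2); [field; lra|]. rewrite Hr2'. field. lra. }
assert (K12 : forall i, i <> B3 ->
  (x0 B1 / rho1 m (Ivp m x0 y0)) * qx sg m (Ivp m x0 y0) i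
     - (y0 B1 / rho1 m (Ivp m x0 y0)) * qy sg m (Ivp m x0 y0) i = x0 i /\
   (y0 B1 / rho1 m (Ivp m x0 y0)) * qx sg m (Ivp m x0 y0) i
     + (x0 B1 / rho1 m (Ivp m x0 y0)) * qy sg m (Ivp m x0 y0) i = y0 i).
{ intros i Hi. destruct i; [| |congruence]; unfold qx, qy; cbv beta iota;
  rewrite ?HD, ?Hd; set (r := rho1 m (Ivp m x0 y0)) in *; clearbody r.
  - split; field; lra.
  - split.
    + transitivity ((x0 B1 * (x0 B1 * x0 B2 + y0 B1 * y0 B2)
                     - y0 B1 * (2 * signed_area x0 y0 * m B3)) / r ^ 2); [field; lra|].
      rewrite S1, Hr2'. field. lra.
    + transitivity ((y0 B1 * (x0 B1 * x0 B2 + y0 B1 * y0 B2)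
                     + x0 B1 * (2 * signed_area x0 y0 * m B3)) / r ^ 2); [field; lra|].
      rewrite S1, Hr2'. field. lra. }
intro i. destruct i; [apply K12; discriminate | apply K12; discriminate |].
destruct (K12 B1 ltac:(discriminate)) as [a1 b1].
destruct (K12 B2 ltac:(discriminate)) as [a2 b2].
unfold qx, qy in *; cbv beta iota in *.
set (c := x0 B1 / rho1 m (Ivp m x0 y0)) in *.
set (s := y0 B1 / rho1 m (Ivp m x0 y0)) in *.
set (u2 := d12 m (Ivp m x0 y0) / rho1 m (Ivp m x0 y0)) in *.
set (v2 := 2 * m B3 * Delta sg m (Ivp m x0 y0) / rho1 m (Ivp m x0 y0)) in *.
set (u1 := rho1 m (Ivp m x0 y0)) in *.
clearbody c s u1 u2 v2.
split.
- transitivity (- (m B1 * (c * u1 - s * 0) + m B2 * (c * u2 - s * v2)) / m B3); [field; lra|].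
  rewrite a1, a2. field_simplify_eq; lra.
- transitivity (- (m B1 * (s * u1 + c * 0) + m B2 * (s * u2 + c * v2)) / m B3); [field; lra|].
  rewrite b1, b2. field_simplify_eq; lra.
Qed.

Ltac td_leaf := first [ assumption |
  match goal with T : forall i, TD ?J (?f i) |- TD ?J (fun s => ?f ?i s) => exact (T i) end |
  match goal with T : forall i, TD ?J (?f i) |- TD ?J (?f ?i) => exact (T i) end ].
Ltac td HJ := repeat match goal with
 | |- TD _ (fun _ => ?c) => apply (TD_const _ HJ)
 | |- TD _ (fun s => _ + _) => apply (TD_plus _ HJ)
 | |- TD _ (fun s => _ - _) => apply (TD_minus _ HJ)
 | |- TD _ (fun s => _ * _) => apply (TD_mult _ HJ)
 | |- TD _ (fun s => - _) => apply (TD_opp _ HJ)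
 | |- TD _ (fun s => _ / _) => apply (TD_div _ HJ)
 | |- TD _ (fun s => _ ^ _) => apply (TD_pow _ HJ)
 | |- TD _ (fun s => sqrt _) => apply (TD_sqrt _ HJ)
 | |- TD _ (fun s => cos _) => apply (TD_cos _ HJ)
 | |- TD _ (fun s => sin _) => apply (TD_sin _ HJ)
 | |- TD _ _ => td_leaf
 end.

Lemma rot_area c s (px py : body -> R) :
  signed_area (fun i => c * px i - s * py i) (fun i => s * px i + c * py i)
  = (c ^ 2 + s ^ 2) * signed_area px py.
Proof. unfold signed_area. field. Qed.

Lemma pair_distinct (px py : body -> R) i j : signed_area px py <> 0 -> i <> j ->
  (px i, py i) <> (px j, py j).
Proof.
intros HA Hij E. injection E as E1 E2.
pose proof (dist_pos3 px py i j HA Hij) as D. unfold dist in D.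
rewrite E1, E2 in D. replace ((px j - px j) ^ 2 + (py j - py j) ^ 2) with 0 in D by ring.
rewrite sqrt_0 in D. lra.
Qed.

Ltac d1_leaf2 := match goal with
 | T : forall i, TD ?J (@?f i) |- D1 ?J _ => first [exact (proj1 (T _)) | exact (proj2 (T _))]
 | T : TD ?J _ |- D1 ?J _ => first [exact (proj1 T) | exact (proj2 T)]
 end.
Ltac d1b := repeat match goal with
 | |- D1 _ (fun _ => ?c) => apply D1_const
 | |- D1 _ (fun s => _ + _) => apply D1_plus
 | |- D1 _ (fun s => _ - _) => apply D1_minus
 | |- D1 _ (fun s => _ * _) => apply D1_mult
 | |- D1 _ (fun s => - _) => apply D1_opp
 | |- D1 _ (fun s => _ / _) => apply D1_div
 | |- D1 _ (fun s => _ ^ _) => apply D1_pow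
 | |- D1 _ _ => d1_leaf2
 end.

Lemma DXgen (th qx qy : R -> R) t w : is_derive th t w -> ex_derive qx t -> ex_derive qy t ->
  Derive (fun s => cos (th s) * qx s - sin (th s) * qy s) t
  = - sin (th t) * w * qx t + cos (th t) * Derive qx t - (cos (th t) * w * qy t + sin (th t) * Derive qy t).
Proof.
intros Ht Hx Hy. assert (He : ex_derive th t) by (eexists; eauto).
apply is_derive_unique. auto_derive; [repeat split; auto|].
eta_fix. rewrite (is_derive_unique _ _ _ Ht). ring.
Qed.

Lemma DYgen (th qx qy : R -> R) t w : is_derive th t w -> ex_derive qx t -> ex_derive qy t ->
  Derive (fun s => sin (th s) * qx s + cos (th s) * qy s) t
  = cos (th t) * w * qx t + sin (th t) * Derive qx t + (- sin (th t) * w * qy t + cos (th t) * Derive qy t).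
Proof.
intros Ht Hx Hy. assert (He : ex_derive th t) by (eexists; eauto).
apply is_derive_unique. auto_derive; [repeat split; auto|].
eta_fix. rewrite (is_derive_unique _ _ _ Ht). ring.
Qed.

Lemma rot_com m c s (px py : body -> R) : com0 m px py ->
  com0 m (fun i => c * px i - s * py i) (fun i => s * px i + c * py i).
Proof.
unfold com0, sum3. intros [A B]. split.
- transitivity (c * (m B1 * px B1 + m B2 * px B2 + m B3 * px B3)
                - s * (m B1 * py B1 + m B2 * py B2 + m B3 * py B3)); [ring|]. rewrite A, B; ring.
- transitivity (s * (m B1 * px B1 + m B2 * px B2 + m B3 * px B3)
                + c * (m B1 * py B1 + m B2 * py B2 + m B3 * py B3)); [ring|]. rewrite A, B; ring.
Qed.

Ltac nzm := repeat (apply Rmult_integral_contrapositive; split); lra.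

Lemma part3 m lo hi t0 : masses_ok m -> in_J lo hi t0 ->
  (forall (Om sg : R) (Ic : body -> R -> R) (x0 y0 : body -> R),
     (sg = 1 \/ sg = -1) ->
     reduced_solution m Om sg lo hi Ic ->
     com0 m x0 y0 ->
     0 < sg * signed_area x0 y0 ->
     (forall i, m i * (x0 i ^ 2 + y0 i ^ 2) = Ic i t0) ->
     exists x y : body -> R -> R,
       is_motion m lo hi x y /\
       (forall i, x i t0 = x0 i /\ y i t0 = y0 i) /\
       (forall t, in_J lo hi t -> angmom m x y t = Om) /\
       (forall t, in_J lo hi t ->
          (forall i, Imom m x y i t = Ic i t) /\
          0 < sg * signed_area (at_time x t) (at_time y t))).
Proof.
intros Hmo H0 Om sg Ic x0 y0 Hsg Hsol Hc0 Hp0 HI0.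
pose proof (inJ_open lo hi) as HJ.
set (J := in_J lo hi) in *.
pose proof Hmo as Hmo'. destruct Hmo' as [Hm Hs]. unfold sum3 in Hs.
pose proof (Hm B1) as m1p; pose proof (Hm B2) as m2p; pose proof (Hm B3) as m3p.
assert (HIp : forall s, J s -> forall i, 0 < Ic i s) by (intros s Hs'; apply (Hsol s Hs')).
assert (Hhp : forall s, J s -> 0 < heron m (at_time Ic s)) by (intros s Hs'; apply (Hsol s Hs')).
assert (TIc : forall i, TD J (Ic i)).
{ intro i; split; intros s Hs'; destruct (Hsol s Hs') as [_ [_ [_ D]]]; destruct (D i) as [D1' D2'];
  auto; eexists; exact D2'. }
assert (THer : TD J (fun t => heron m (at_time Ic t))).
{ unfold heron, rsq_opp, Itot, sum3, at_time; cbv beta zeta iota delta [nxt]. td HJ.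
  all: intros s Hs'; nzm. }
assert (TRho : TD J (fun t => rho1 m (at_time Ic t))).
{ unfold rho1, at_time. td HJ.
  all: intros s Hs'; try lra. pose proof (HIp s Hs' B1). apply Rdiv_lt_0_compat; lra. }
assert (TDel : TD J (fun t => Delta sg m (at_time Ic t))).
{ unfold Delta. td HJ. all: intros s Hs'; try lra. apply Hhp; auto. }
assert (Td12 : TD J (fun t => d12 m (at_time Ic t))).
{ unfold d12, at_time. td HJ. all: intros s Hs'; nzm. }
assert (Hrho : forall s, J s -> 0 < rho1 m (at_time Ic s)).
{ intros s Hs'. apply rho1_pos; auto. apply HIp; auto. }
assert (TQx : forall i, TD J (fun t => qx sg m (at_time Ic t) i)).
{ intro i; destruct i; unfold qx; cbv beta iota; td HJ; intros s Hs'; pose proof (Hrho s Hs'); lra. }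
assert (TQy : forall i, TD J (fun t => qy sg m (at_time Ic t) i)).
{ intro i; destruct i; unfold qy; cbv beta iota; td HJ; intros s Hs'; pose proof (Hrho s Hs'); lra. }
set (Qx := fun i t => qx sg m (at_time Ic t) i).
set (Qy := fun i t => qy sg m (at_time Ic t) i).
assert (TQx' : forall i, TD J (Qx i)) by exact TQx.
assert (TQy' : forall i, TD J (Qy i)) by exact TQy.
clear TQx TQy.
set (g := fun t => (Om - (m B1 * (Qx B1 t * Derive (Qy B1) t - Qy B1 t * Derive (Qx B1) t)
                       + m B2 * (Qx B2 t * Derive (Qy B2) t - Qy B2 t * Derive (Qx B2) t)
                       + m B3 * (Qx B3 t * Derive (Qy B3) t - Qy B3 t * Derive (Qx B3) t)))
                  / (Ic B1 t + Ic B2 t + Ic B3 t)).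
assert (Dg : D1 J g).
{ unfold g. d1b. intros s Hs'. pose proof (HIp s Hs' B1); pose proof (HIp s Hs' B2);
  pose proof (HIp s Hs' B3). lra. }
assert (Gc : forall z, J z -> continuous g z).
{ intros z Hz. exact (ex_derive_continuous g z (Dg z Hz)). }
assert (E0 : at_time Ic t0 = Ivp m x0 y0).
{ apply functional_extensionality; intro i. unfold at_time, Ivp. symmetry; apply HI0. }
destruct (Q_init m sg x0 y0 Hmo Hc0 Hsg Hp0) as [Hcs0 Hq0].
destruct (angle_exists _ _ Hcs0) as [th0 [Hcos0 Hsin0]].
set (th := fun t => th0 + RInt g t0 t).
assert (Hth : forall t, J t -> is_derive th t (g t)).
{ intros t Ht.
  assert (HR : is_derive (fun b => RInt g t0 b) t (g t)).
  { apply (is_derive_RInt g (fun b => RInt g t0 b) t0 t).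
    - apply (filter_imp J); [|apply HJ; auto]. intros b Hb.
      apply (RInt_correct g t0 b). apply ex_RInt_continuous. intros z Hz.
      apply Gc. apply (seg_in_J lo hi t0 b); auto.
    - apply Gc; auto. }
  assert (H := is_derive_plus (fun _ => th0) (fun b => RInt g t0 b) t zero (g t)
                 (is_derive_const th0 t) HR).
  rewrite plus_zero_l in H. exact H. }
assert (TTh : TD J th).
{ split.
  - intros t Ht. eexists. apply Hth; auto.
  - apply (D1_ext J HJ) with g; auto. intros s0 Hs0. apply is_derive_unique, Hth; auto. }
assert (Hth0 : th t0 = th0).
{ unfold th. rewrite RInt_point. unfold zero; simpl. ring. }
set (X := fun i t => cos (th t) * Qx i t - sin (th t) * Qy i t).
set (Y := fun i t => sin (th t) * Qx i t + cos (th t) * Qy i t).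
assert (TX : forall i, TD J (X i)).
{ intro i. unfold X. td HJ. }
assert (TY : forall i, TD J (Y i)).
{ intro i. unfold Y. td HJ. }
assert (QI : forall s, J s -> forall i, m i * (Qx i s ^ 2 + Qy i s ^ 2) = Ic i s).
{ intros s' Hs' i. exact (Q_I sg m (at_time Ic s') i Hmo Hsg (HIp s' Hs' B1) (Rlt_le _ _ (Hhp s' Hs'))). }
assert (CS : forall t, cos (th t) ^ 2 + sin (th t) ^ 2 = 1).
{ intro t. pose proof (sin2_cos2 (th t)) as S. unfold Rsqr in S. lra. }
assert (DX : forall t, J t -> forall i, Derive (X i) t =
   - sin (th t) * g t * Qx i t + cos (th t) * Derive (Qx i) t
   - (cos (th t) * g t * Qy i t + sin (th t) * Derive (Qy i) t)).
{ intros t Ht i. exact (DXgen th (Qx i) (Qy i) t (g t) (Hth t Ht) (proj1 (TQx' i) t Ht) (proj1 (TQy' i) t Ht)). }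
assert (DY : forall t, J t -> forall i, Derive (Y i) t =
   cos (th t) * g t * Qx i t + sin (th t) * Derive (Qx i) t
   + (- sin (th t) * g t * Qy i t + cos (th t) * Derive (Qy i) t)).
{ intros t Ht i. exact (DYgen th (Qx i) (Qy i) t (g t) (Hth t Ht) (proj1 (TQx' i) t Ht) (proj1 (TQy' i) t Ht)). }
assert (Hang : forall t, J t -> angmom m X Y t = Om).
{ intros t Ht. unfold angmom, sum3. rewrite !(DX t Ht), !(DY t Ht).
  pose proof (QI t Ht B1) as q1; pose proof (QI t Ht B2) as q2; pose proof (QI t Ht B3) as q3.
  pose proof (CS t) as cs.
  pose proof (HIp t Ht B1); pose proof (HIp t Ht B2); pose proof (HIp t Ht B3).
  unfold X, Y. unfold g.
  set (c := cos (th t)) in *. set (sn := sin (th t)) in *.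
  set (L := m B1 * (Qx B1 t * Derive (Qy B1) t - Qy B1 t * Derive (Qx B1) t)
          + m B2 * (Qx B2 t * Derive (Qy B2) t - Qy B2 t * Derive (Qx B2) t)
          + m B3 * (Qx B3 t * Derive (Qy B3) t - Qy B3 t * Derive (Qx B3) t)).
  set (G := (Om - L) / (Ic B1 t + Ic B2 t + Ic B3 t)).
  transitivity ((c ^ 2 + sn ^ 2) * (L + G * (m B1 * (Qx B1 t ^ 2 + Qy B1 t ^ 2)
      + m B2 * (Qx B2 t ^ 2 + Qy B2 t ^ 2) + m B3 * (Qx B3 t ^ 2 + Qy B3 t ^ 2)))).
  { unfold L. ring. }
  rewrite cs, q1, q2, q3. unfold G. field. lra. }
assert (Himom : forall t, J t -> forall i, Imom m X Y i t = Ic i t).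
{ intros t Ht i. unfold Imom, X, Y. rewrite <- (QI t Ht i).
  transitivity ((cos (th t) ^ 2 + sin (th t) ^ 2) * (m i * (Qx i t ^ 2 + Qy i t ^ 2))); [ring|].
  rewrite CS; ring. }
assert (Hcom : forall t, J t -> com0 m (at_time X t) (at_time Y t)).
{ intros t Ht.
  change (at_time X t) with (fun i => cos (th t) * qx sg m (at_time Ic t) i - sin (th t) * qy sg m (at_time Ic t) i).
  change (at_time Y t) with (fun i => sin (th t) * qx sg m (at_time Ic t) i + cos (th t) * qy sg m (at_time Ic t) i).
  apply rot_com. apply Q_com; [exact Hmo | apply (HIp t Ht B1)]. }
assert (Harea : forall t, J t -> 0 < sg * signed_area (at_time X t) (at_time Y t)).
{ intros t Ht.
  change (at_time X t) with (fun i => cos (th t) * qx sg m (at_time Ic t) i - sin (th t) * qy sg m (at_time Ic t) i).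
  change (at_time Y t) with (fun i => sin (th t) * qx sg m (at_time Ic t) i + cos (th t) * qy sg m (at_time Ic t) i).
  rewrite rot_area, CS, Q_area; [|exact Hmo|apply (HIp t Ht B1)]. unfold Delta.
  pose proof (sqrt_lt_R0 _ (Hhp t Ht)).
  replace (sg * (1 * (sg * sqrt (heron m (at_time Ic t)) / 4)))
    with (sg ^ 2 * sqrt (heron m (at_time Ic t)) / 4) by field.
  destruct Hsg as [E|E]; rewrite E; lra. }
assert (Hinit : forall i, X i t0 = x0 i /\ Y i t0 = y0 i).
{ intro i. unfold X, Y, Qx, Qy. rewrite Hth0, Hcos0, Hsin0, E0. apply Hq0. }
exists X, Y. split; [|split; [exact Hinit|split; [exact Hang|]]].
- intros t Ht. split; [apply Hcom; auto|split].
  + intros i j Hij. assert (HA : signed_area (at_time X t) (at_time Y t) <> 0)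
      by (pose proof (Harea t Ht) as P; intro E; rewrite E in P; lra).
    exact (pair_distinct (at_time X t) (at_time Y t) i j HA Hij).
  + assert (HD : forall i, is_derive (fun s => Derive (Ic i) s) t
               (reduced_rhs Om sg m (at_time Ic t) (fun j => Derive (Ic j) t) i)).
    { intro i. destruct (Hsol t Ht) as [_ [_ [_ D]]]. apply (D i). }
    assert (NS := newton_struct m Om sg Ic X Y J t HJ Ht Hmo Hsg TX TY Hcom Hang (Harea t Ht) Himom HD).
    intro i. split; [exact (proj1 (TX i) t Ht)|split; [exact (proj1 (TY i) t Ht)|split]].
    * rewrite <- (proj1 (NS i)). apply Derive_correct. exact (proj2 (TX i) t Ht).
    * rewrite <- (proj2 (NS i)). apply Derive_correct. exact (proj2 (TY i) t Ht).
- intros t Ht. split; [apply Himom; auto| apply Harea; auto].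
Qed.


Theorem theoremE1 (m : body -> R) (lo hi : Rbar) (t0 : R) :
  masses_ok m -> in_J lo hi t0 ->
  (* (1) determination by moduli curve, initial position and angular momentum *)
  (forall (x y x' y' : body -> R -> R) (Om : R),
     is_motion m lo hi x y -> is_motion m lo hi x' y' ->
     noncollinear (at_time x t0) (at_time y t0) ->
     (forall t, in_J lo hi t -> angmom m x y t = Om) ->
     (forall t, in_J lo hi t -> angmom m x' y' t = Om) ->
     (forall i, x' i t0 = x i t0 /\ y' i t0 = y i t0) ->
     same_moduli_curve lo hi x y x' y' ->
     forall t, in_J lo hi t -> forall i, x' i t = x i t /\ y' i t = y i t) /\
  (* (2) the moduli curve solves the Omega-reduced Newton equation
         (wherever the configuration is non-collinear, with orientation sg) *)
  (forall (x y : body -> R -> R) (Om : R),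
     is_motion m lo hi x y ->
     (forall t, in_J lo hi t -> angmom m x y t = Om) ->
     forall (a b : Rbar) (sg : R), (sg = 1 \/ sg = -1) ->
     (forall t, in_J a b t -> in_J lo hi t) ->
     (forall t, in_J a b t -> 0 < sg * signed_area (at_time x t) (at_time y t)) ->
     reduced_solution m Om sg a b (Imom m x y)) /\
  (* (3) converse: realization of any solution curve *)
  (forall (Om sg : R) (Ic : body -> R -> R) (x0 y0 : body -> R),
     (sg = 1 \/ sg = -1) ->
     reduced_solution m Om sg lo hi Ic ->
     com0 m x0 y0 ->
     0 < sg * signed_area x0 y0 ->
     (forall i, m i * (x0 i ^ 2 + y0 i ^ 2) = Ic i t0) ->
     exists x y : body -> R -> R,
       is_motion m lo hi x y /\
       (forall i, x i t0 = x0 i /\ y i t0 = y0 i) /\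
       (forall t, in_J lo hi t -> angmom m x y t = Om) /\
       (forall t, in_J lo hi t ->
          (forall i, Imom m x y i t = Ic i t) /\
          0 < sg * signed_area (at_time x t) (at_time y t))).
Proof.
intros Hmo H0.
split; [apply (part1 m lo hi t0 Hmo H0)|].
split; [apply (part2 m lo hi Hmo)|apply (part3 m lo hi t0 Hmo H0)].
Qed.
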